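(* Let $(Q,\rightarrow)$ be a finite transition system and $\mathscr{R}$ a preorder on $Q$. Among all equivalence relations $\mathscr{P}$ on $Q$ with $\mathscr{P}\subseteq\mathscr{R}$ and $\mathscr{P}\circ\rightarrow^{-1}\subseteq\rightarrow^{-1}\circ\mathscr{R}$ (the $\mathscr{R}$-stable equivalence relations), there is a coarsest one, i.e. one containing all the others.
   Context: For relations on $Q$: $\mathscr{R}^{-1}=\{(y,x)\mid(x,y)\in\mathscr{R}\}$, $\mathscr{R}(X)=\{q'\mid\exists q\in X,\ q\,\mathscr{R}\,q'\}$, and $\mathscr{S}\circ\mathscr{R}=\{(x,y)\mid y\in\mathscr{S}(\mathscr{R}(x))\}$. A preorder is a reflexive transitive relation. A relation is coarser than another if it contains it. *)

(* Defs.v *)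
From mathcomp Require Import all_boot.
Set Implicit Arguments. Unset Strict Implicit. Unset Printing Implicit Defensive.

Definition relation (Q : Type) := Q -> Q -> Prop.

Definition rinv (Q : Type) (R : relation Q) : relation Q := fun y x => R x y.

Definition rcomp (Q : Type) (S R : relation Q) : relation Q :=
  fun x y => exists z, R x z /\ S z y.

Definition rsub (Q : Type) (R S : relation Q) : Prop := forall x y, R x y -> S x y.

Definition is_preorder (Q : Type) (R : relation Q) : Prop :=
  (forall x, R x x) /\ (forall x y z, R x y -> R y z -> R x z).

Definition is_equivalence (Q : Type) (P : relation Q) : Prop :=
  (forall x, P x x) /\ (forall x y, P x y -> P y x) /\
  (forall x y z, P x y -> P y z -> P x z).

Definition R_stable (Q : Type) (trans R P : relation Q) : Prop :=
  rsub P R /\ rsub (rcomp P (rinv trans)) (rcomp (rinv trans) R).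

(* Main.v *)
Require Import Defs.
From mathcomp Require Import all_boot.
From Stdlib Require Import Relation_Operators.

Theorem proposition2 (Q : finType) (trans : relation Q) (R : relation Q) :
  is_preorder R ->
  exists P : relation Q,
    is_equivalence P /\ R_stable trans R P /\
    (forall P' : relation Q,
        is_equivalence P' -> R_stable trans R P' -> rsub P' P).
Proof.
  move=> [Rr Rt].
  pose U := fun x y : Q => exists P', is_equivalence P' /\ R_stable trans R P' /\ P' x y.
  exists (clos_trans Q U).
  have Ur : forall x, U x x.
    move=> x; exists (@eq Q); split; [|split; [split|]]; last by [].
    - split; first by []. split; first by move=> ? ? ->.
      by move=> ? ? ? -> ->.
    - by move=> a b ->.
    - move=> a b [z [Hz Ezb]]; subst b; exists a; split; [exact: Rr| exact: Hz].
  have Us : forall x y, U x y -> U y x.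
    move=> x y [P' [[r [s t]] [St H]]]; exists P'; split; [by split|split; [by []| exact: s]].
  split; [split; [|split]|split; [split|]].
  - by move=> x; apply: t_step.
  - move=> x y; elim=> [a b /Us H|a b c _ IH1 _ IH2]; first exact: t_step.
    exact: t_trans IH2 IH1.
  - move=> x y z; exact: t_trans.
  - move=> x y; elim=> [a b [P' [_ [[S1 _] H]]]|a b c _ IH1 _ IH2]; first exact: S1.
    exact: Rt IH1 IH2.
  - move=> x y [z [Hzx Hzy]]; move: x Hzx.
    elim: Hzy => [a b [P' [_ [[_ S2] H]]]|a b c _ IH1 _ IH2] x Hax.
    + apply: S2; exists a; split; [exact: Hax| exact: H].
    + have [w1 [Rw1 Tw1]] := IH1 x Hax.
      have [w2 [Rw2 Tw2]] := IH2 w1 Tw1.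
      exists w2; split; [exact: Rt Rw1 Rw2| exact: Tw2].
  - move=> P' HP' HS x y H; apply: t_step; exists P'; by split; [|split].
Qed.
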